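(* Let $\beta,p,n$ be positive integers and $\mathcal{S}=\mathcal{S}_n(\beta,p)$. If $j$ is an integer with $n-\log_2|\mathcal{S}|+\log_2 n\le j\le n$, then there exists an $(n,j)$ linear code $B_j$ such that $m_{B_j}<1$, where $m_{B}=|V_n\setminus(B+\mathcal{S})|$; that is, $B_j+\mathcal{S}=V_n$.
   Context: $V_n=\{0,1\}^n$ with componentwise addition mod 2. A binary vector is $(\beta,p)$-window-weight-limited if every $\beta$ consecutive entries contain at most $p$ ones; $\mathcal{S}_n(\beta,p)$ is the set of such vectors of length $n$. For $B_1,B_2\subseteq V_n$, $B_1+B_2=\{\mathbf{b}_1+\mathbf{b}_2:\mathbf{b}_i\in B_i\}$. An $(n,j)$ linear code is a $j$-dimensional subspace of $V_n$. *)

(* Defs.v *)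
From Stdlib Require Import Reals.
From mathcomp Require Import all_boot all_order all_algebra.
Set Implicit Arguments. Unset Strict Implicit. Unset Printing Implicit Defensive.
Import GRing.Theory.

Notation Vn n := ('rV['F_2]_n).

Definition window_weight (n beta : nat) (v : Vn n) (i : nat) : nat :=
  #|[set k : 'I_n | (i <= k < i + beta)%N && (v ord0 k == 1%R)]|.

Definition wwl (n beta p : nat) (v : Vn n) : bool :=
  [forall i : 'I_n, (i + beta <= n)%N ==> (window_weight beta v i <= p)%N].

Definition Sset (n beta p : nat) : {set Vn n} := [set v | wwl beta p v].

(* B is given as the row space of a square matrix G; (b <= G)%MS means b in B.
   m_B = |V_n \ (B + S)|. *)
Definition sumset (n : nat) (G : 'M['F_2]_n) (S : {set Vn n}) : {set Vn n} :=
  [set v | [exists b : Vn n, [exists s : Vn n,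
     [&& (b <= G)%MS, s \in S & v == (b + s)%R]]]].

Definition mB (n : nat) (G : 'M['F_2]_n) (S : {set Vn n}) : nat :=
  #|[set: Vn n] :\: sumset G S|.

Definition log2 (x : R) : R := Rdiv (ln x) (ln 2).

(* Main.v *)
Require Import Defs.
From Stdlib Require Import Reals.
From mathcomp Require Import all_boot all_order all_algebra.
From mathcomp Require Import zify.
From Stdlib Require Import Lra.
Set Implicit Arguments. Unset Strict Implicit. Unset Printing Implicit Defensive.
Import GRing.Theory.
Local Open Scope ring_scope.

Definition Uc n (B : 'M['F_2]_n) (S : {set Vn n}) : {set Vn n} :=
  [set: Vn n] :\: sumset B S.

Lemma F2_addxx (x : 'F_2) : x + x = 0.
Proof. by apply/val_inj; case: x => [[|[|]]]. Qed.

Lemma V_addxx n (v : Vn n) : v + v = 0.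
Proof. by apply/rowP => i; rewrite !mxE F2_addxx. Qed.

Lemma Uc_mono n (B G : 'M['F_2]_n) S : (B <= G)%MS -> Uc G S \subset Uc B S.
Proof.
move=> BG; apply/subsetP => x; rewrite !inE /=; rewrite !andbT; apply: contra.
case/existsP => b /existsP [s /and3P [bB sS /eqP ->]].
apply/existsP; exists b; apply/existsP; exists s.
by rewrite (submx_trans bB BG) sS eqxx.
Qed.

Lemma Uc_step n (B : 'M['F_2]_n) S (v : Vn n) :
  Uc (B + v)%MS S \subset [set x in Uc B S | x + v \in Uc B S].
Proof.
apply/subsetP => x Hx; rewrite inE.
rewrite (subsetP (Uc_mono S (addsmxSl B v)) _ Hx) /=.
move: Hx; rewrite !inE /= !andbT; apply: contra.
case/existsP => b /existsP [s /and3P [bB sS /eqP E]].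
apply/existsP; exists (b + v); apply/existsP; exists s.
rewrite addmx_sub ?(submx_trans bB (addsmxSl B v)) ?addsmxSr // sS /=.
apply/eqP.
have -> : x = x + v + v by rewrite -addrA V_addxx addr0.
by rewrite E addrAC.
Qed.

Lemma avg n (U : {set Vn n}) : exists v : Vn n,
  (#|[set x in U | (x + v)%R \in U]| * #|{: Vn n}| <= #|U| ^ 2)%N.
Proof.
have Hs : (\sum_(v : Vn n) #|[set x in U | (x + v)%R \in U]| = #|U| ^ 2)%N.
  transitivity (\sum_(v : Vn n) \sum_(x in U) nat_of_bool ((x + v)%R \in U))%N.
    apply: eq_bigr => v _.
    by rewrite -sum1_card big_mkcond /= [RHS]big_mkcond; apply: eq_bigr => x _; rewrite inE; case: (x \in U); case: ((x + v)%R \in U).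
  rewrite exchange_big /= expnS expn1 -sum_nat_const; apply: eq_bigr => x xU.
  rewrite -(card_preimset U (addrI x)) -sum1_card [RHS]big_mkcond /=.
  by apply: eq_bigr => v _; rewrite inE; case: ((x + v)%R \in U).
case: (pickP [pred v : Vn n | (#|[set x in U | (x + v)%R \in U]| * #|{: Vn n}| <= #|U| ^ 2)%N]) => [v Hv | H]; first by exists v.
have : (\sum_(v : Vn n) (#|U| ^ 2).+1 <= \sum_(v : Vn n) #|[set x in U | (x + v)%R \in U]| * #|{: Vn n}|)%N.
  by apply: leq_sum => v _; rewrite ltnNge; move: (H v) => /= ->.
rewrite -big_distrl /= Hs sum_nat_const.
have : (0 < #|{: Vn n}|)%N by apply/card_gt0P; exists 0.
move: #|{: Vn n}| (#|U| ^ 2)%N => a b; rewrite mulnS mulnC; lia.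
Qed.

Lemma arith N u u' f A P : (u' <= f)%N -> (f * N <= u ^ 2)%N ->
  (u * P <= N * A)%N -> (0 < N)%N -> (u' * P ^ 2 <= N * A ^ 2)%N.
Proof.
move=> H1 H2 H3 N0; rewrite -(leq_pmul2l N0).
apply: (@leq_trans (f * N * P ^ 2)).
  by rewrite mulnA [(N * u')%N]mulnC leq_mul2r leq_mul2r H1 !orbT.
apply: (@leq_trans ((u * P) ^ 2)).
  by rewrite expnMn leq_mul2r H2 orbT.
apply: (@leq_trans ((N * A) ^ 2)).
  by rewrite leq_exp2r.
by rewrite expnMn expnS expn1 mulnA.
Qed.

Lemma iter_bound n (S : {set Vn n}) k : exists B : 'M['F_2]_n,
  (\rank B <= k)%N /\
  (#|Uc B S| * #|{: Vn n}| ^ (2 ^ k) <= #|{: Vn n}| * #|Uc 0 S| ^ (2 ^ k))%N.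
Proof.
have N0 : (0 < #|{: Vn n}|)%N by apply/card_gt0P; exists 0.
elim: k => [|k [B [rB HB]]].
  by exists 0; rewrite mxrank0 expn0 !expn1 mulnC.
have [v Hv] := avg (Uc B S).
exists (B + v)%MS; split.
  apply: leq_trans (mxrank_adds_leqif B v) _.
  by rewrite -(addn1 k) leq_add // rank_rV leq_b1.
have Hu := subset_leq_card (@Uc_step _ B S v).
rewrite expnSr !expnM; exact: arith Hu Hv HB N0.
Qed.

Lemma ext_rank (F : fieldType) n (B : 'M[F]_n) d : (\rank B + d <= n)%N ->
  exists G : 'M[F]_n, (B <= G)%MS /\ \rank G = (\rank B + d)%N.
Proof.
elim: d => [|d IH] H; first by exists B; rewrite addn0.
have H0 : (\rank B + d <= n)%N by rewrite addnS in H; exact: ltnW.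
have [G [BG rG]] := IH H0.
have : ~~ (1%:M <= G)%MS.
  apply/negP => /mxrankS; rewrite mxrank1 rG => H'.
  by move: (leq_trans H H'); rewrite addnS ltnn.
case/row_subPn => i Hi; set v := row i 1%:M in Hi.
have v0 : v != 0 by apply: contraNneq Hi => ->; rewrite sub0mx.
have c0 : \rank (G :&: v)%MS = 0%N.
  apply/eqP; rewrite -leqn0; move: (mxrank_leqif_sup (capmxSr G v)).
  rewrite rank_rV v0 => -[]; case: (\rank (G :&: v)%MS) => [|[|m]] //= _.
  move/esym/idP/(submx_trans)/(_ (capmxSl G v)) => vG.
  by rewrite vG in Hi.
exists (G + v)%MS; split; first exact: submx_trans BG (addsmxSl G v).
move: (mxrank_sum_cap G v); rewrite c0 addn0 rank_rV v0 rG => ->.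
by rewrite addnS addn1.
Qed.

Section RealPart.
Local Open Scope R_scope.

Lemma exp_pow_INR (a : R) (M : nat) : exp a ^ M = exp (INR M * a).
Proof.
elim: M => [|M IH]; first by rewrite /= Rmult_0_l exp_0.
rewrite /= IH; change (exp a * exp (INR M * a) = exp (INR M.+1 * a)); rewrite S_INR Rmult_plus_distr_r Rmult_1_l exp_plus; ring.
Qed.

Lemma two_pow_lt (n : nat) : (0 < n)%N -> 2 ^ n < exp (INR n).
Proof.
move=> n0; rewrite -(Rmult_1_r (INR n)) -exp_pow_INR.
have e2 : 2 < exp 1 by have := exp_ineq1 1 ltac:(lra); lra.
case: n n0 => [|n] // _.
elim: n => [|n IH]; first by rewrite /=; lra.
rewrite /= in IH *.
have h2 : 0 <= 2 * 2 ^ n by have := pow_le 2 n ltac:(lra); lra.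
apply: Rle_lt_trans (_ : 2 * (2 * 2 ^ n) <= 2 * (exp 1 * exp 1 ^ n)) _.
  apply: Rmult_le_compat_l; lra.
apply: Rmult_lt_compat_r; last lra.
have := exp_pos 1; have := pow_lt (exp 1) n (exp_pos 1); nra.
Qed.

Lemma real_key (n s N M : nat) : (0 < n)%N -> (0 < s)%N -> (s <= N)%N ->
  INR N = 2 ^ n -> INR n * INR N <= INR s * INR M ->
  INR N * INR (N - s) ^ M < INR N ^ M.
Proof.
move=> n0 s0 sN HN HM.
have Np : 0 < INR N by rewrite HN; apply: pow_lt; lra.
have sp : 0 < INR s by apply: lt_0_INR; apply/ltP.
set x := INR s / INR N.
have HNs : INR (N - s) = INR N * (1 - x).
  by rewrite minus_INR; [rewrite /x; field; lra | apply/leP].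
have h1 : INR (N - s) <= INR N * exp (- x).
  rewrite HNs; apply: Rmult_le_compat_l; first lra.
  have := exp_ineq1_le (- x); lra.
have h2 : INR (N - s) ^ M <= INR N ^ M * exp (- (x * INR M)).
  apply: Rle_trans (pow_incr _ _ M (conj (pos_INR _) h1)) _.
  rewrite Rpow_mult_distr exp_pow_INR; replace (INR M * - x) with (- (x * INR M)) by ring; lra.
have h3 : exp (- (x * INR M)) <= exp (- INR n).
  have : INR n <= x * INR M.
    rewrite /x; apply (Rmult_le_reg_l (INR N)) => //.
    by rewrite -Rmult_assoc Rmult_div_assoc Rmult_div_r; [lra | lra].
  move=> H; case: (Req_dec (x * INR M) (INR n)) => [->|ne]; first lra.
  left; apply: exp_increasing; lra.
have h4 : INR N * exp (- INR n) < 1.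
  rewrite exp_Ropp HN; have := two_pow_lt n0; have := exp_pos (INR n).
  move=> p q; apply (Rmult_lt_reg_r (exp (INR n))) => //.
  rewrite Rmult_assoc Rinv_l; lra.
have NMp : 0 < INR N ^ M by apply: pow_lt.
have ep : 0 < exp (- INR n) by apply: exp_pos.
apply: Rle_lt_trans (_ : INR N * (INR N ^ M * exp (- INR n)) < _).
  apply: Rmult_le_compat_l; first lra.
  apply: Rle_trans h2 _; apply: Rmult_le_compat_l; lra.
rewrite -Rmult_assoc [INR N * _]Rmult_comm Rmult_assoc.
rewrite -{2}(Rmult_1_r (INR N ^ M)); apply: Rmult_lt_compat_l => //.
Qed.

Lemma INR_expn (m k : nat) : INR (m ^ k)%N = INR m ^ k.
Proof.
elim: k => [|k IH]; first by rewrite expn0.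
by rewrite expnS mult_INR IH.
Qed.

Lemma ln2_pos : 0 < ln 2.
Proof. have := ln_lt_2; lra. Qed.

Lemma hyp_HM (n s j N : nat) : (0 < n)%N -> (0 < s)%N -> N = (2 ^ n)%N ->
  INR n - log2 (INR s) + log2 (INR n) <= INR j ->
  INR n * INR N <= INR s * INR (2 ^ j)%N.
Proof.
move=> n0 s0 -> H.
rewrite !INR_expn.
have e2 : INR 2 = 2 by [].
rewrite e2.
have np : 0 < INR n by apply: lt_0_INR; apply/ltP.
have sp : 0 < INR s by apply: lt_0_INR; apply/ltP.
apply: Rnot_lt_le => Hlt.
have := ln_increasing _ _ (Rmult_lt_0_compat _ _ sp (pow_lt 2 j ltac:(lra))) Hlt.
rewrite !ln_mult ?ln_pow //; try lra; try (apply: pow_lt; lra).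
move: H; rewrite /log2 => H.
have l2 := ln2_pos.
have H' : INR n * ln 2 - ln (INR s) + ln (INR n) <= INR j * ln 2.
  have ha : ln (INR s) / ln 2 * ln 2 = ln (INR s) by field; lra.
  have hb : ln (INR n) / ln 2 * ln 2 = ln (INR n) by field; lra.
  have := Rmult_le_compat_r (ln 2) _ _ (Rlt_le _ _ l2) H.
  lra.
lra.
Qed.

Lemma nat_key (n s N M : nat) : (0 < n)%N -> (0 < s)%N -> (s <= N)%N ->
  N = (2 ^ n)%N -> INR n * INR N <= INR s * INR M ->
  ~~ (N ^ M <= N * (N - s) ^ M)%N.
Proof.
move=> n0 s0 sN HN HM.
have K := real_key n0 s0 sN ltac:(rewrite HN INR_expn; done) HM.
apply/negP => /leP /le_INR; rewrite mult_INR !INR_expn; lra.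
Qed.

End RealPart.


Theorem lemma7 (beta p n : nat) (hbeta : (0 < beta)%N) (hp : (0 < p)%N)
  (hn : (0 < n)%N) (j : nat) :
  Rle (Rplus (Rminus (INR n) (log2 (INR #|Sset n beta p|))) (log2 (INR n))) (INR j) ->
  (j <= n)%N ->
  exists G : 'M['F_2]_n,
    \rank G = j /\ (mB G (Sset n beta p) < 1)%N.
Proof.
move=> H jn.
set S := Sset n beta p in H *.
have N2 : #|{: Vn n}| = (2 ^ n)%N by rewrite card_mx card_Fp // mul1n.
have s0 : (0 < #|S|)%N.
  apply/card_gt0P; exists 0; rewrite inE /wwl; apply/forallP => i; apply/implyP => _.
  rewrite /window_weight.
  have -> : [set k : 'I_n | (i <= k < i + beta)%N && ((0 : Vn n) ord0 k == 1%R)] = set0.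
    by apply/setP => k; rewrite !inE mxE andbF.
  by rewrite cards0.
have sN : (#|S| <= #|{: Vn n}|)%N by apply: max_card.
have a0 : (#|Uc 0 S| <= #|{: Vn n}| - #|S|)%N.
  rewrite -(cardsC S) addKn; apply: subset_leq_card; apply/subsetP => x.
  rewrite !inE /= andbT; apply: contra => xS.
  apply/existsP; exists 0; apply/existsP; exists x.
  by rewrite sub0mx add0r eqxx andbT inE.
have HM := hyp_HM hn s0 N2 H.
have [B [rB HB]] := iter_bound S j.
have u0 : #|Uc B S| = 0%N.
  apply/eqP; rewrite eqn0Ngt; apply/negP => u1.
  have := nat_key hn s0 sN N2 HM; apply/negP/negPn.
  apply: leq_trans (leq_trans _ HB) _.
    by rewrite leq_pmull.
  by rewrite leq_mul2l leq_exp2r ?expn_gt0 ?a0 ?orbT.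
have rj : (\rank B + (j - \rank B) <= n)%N by rewrite subnKC.
have [G [BG rG]] := ext_rank rj.
exists G; split; first by rewrite rG subnKC.
rewrite ltnS leqn0 /mB; apply/eqP.
have := subset_leq_card (Uc_mono S BG); rewrite /Uc u0 leqn0 => /eqP //.
Qed.
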